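(* Let $p$ be an odd prime and let $q\in\mathbb C_p$ with $|1-q|_p<p^{-1/(p-1)}$. For every $n\in\mathbb Z_+=\{0,1,2,\dots\}$, $$E_{n,q}=\sum_{k=0}^n\sum_{m=0}^k\sum_{l=m}^k q^{\binom k2}s_{2,q}(n,k)\,(q-1)^{m-k}\binom kl_q q^{\binom l2+l(1-k)}\binom lm(-1)^{l+k}E_{m,q}.$$
   Context: $\mathbb Z_p,\mathbb C_p$ denote the $p$-adic integers and the completion of an algebraic closure of $\mathbb Q_p$; $|\cdot|_p$ is normalized by $|p|_p=p^{-1}$. For $x\in\mathbb Z_p$, $[x]_q=\frac{1-q^x}{1-q}$. The fermionic $p$-adic integral of a uniformly differentiable $f:\mathbb Z_p\to\mathbb C_p$ is $\int_{\mathbb Z_p}f(x)\,d\mu_{-1}(x)=\lim_{N\to\infty}\sum_{x=0}^{p^N-1}f(x)(-1)^x$. The $q$-Euler numbers are $E_{n,q}=\int_{\mathbb Z_p}[x]_q^n\,d\mu_{-1}(x)$ (equivalently $E_{n,q}=\frac{2}{(1-q)^n}\sum_{l=0}^n\binom nl(-1)^l\frac{1}{1+q^l}$). $[n]_q!=[n]_q[n-1]_q\cdots[1]_q$ ($[0]_q!=1$) and $\binom kl_q=\frac{[k]_q!}{[l]_q![k-l]_q!}$; $\binom lm$ is the ordinary binomial coefficient. The $q$-Stirling numbers of the second kind $s_{2,q}(n,k)$ are the coefficients in the identity $[x]_q^n=\sum_{k=0}^n q^{\binom k2}s_{2,q}(n,k)\,[x]_q[x-1]_q\cdots[x-k+1]_q$,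 viewed as an identity of polynomials in $[x]_q$ (using $[x-i]_q=q^{-i}([x]_q-[i]_q)$). *)

(* Defs.v *)
From HB Require Import structures.
From mathcomp Require Import all_boot all_order all_algebra all_field.
From mathcomp Require Import all_classical all_reals all_analysis.
Set Implicit Arguments. Unset Strict Implicit. Unset Printing Implicit Defensive.
Import Order.TTheory GRing.Theory Num.Theory.
Local Open Scope ring_scope.

Definition nonarch_abs (R : realType) (K : fieldType) (abs : K -> R) : Prop :=
  [/\ forall x, 0 <= abs x,
      forall x, abs x = 0 <-> x = 0,
      forall x y, abs (x * y) = abs x * abs y
    & forall x y, abs (x + y) <= Num.max (abs x) (abs y)].

Definition abs_complete (R : realType) (K : fieldType) (abs : K -> R) : Prop :=
  forall u : nat -> K,
    (forall e : R, 0 < e -> exists N, forall m n, (N <= m)%N -> (N <= n)%N ->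
        abs (u m - u n) < e) ->
    exists l, forall e : R, 0 < e -> exists N, forall n, (N <= n)%N ->
        abs (u n - l) < e.

(* K behaves like C_p: an algebraically closed (K is a closedFieldType),
   characteristic 0 field, complete for a nonarchimedean absolute value
   normalized by |p|_p = p^-1.  Such a K contains C_p isometrically. *)
Definition Cp_like (R : realType) (K : fieldType) (p : nat) (abs : K -> R) : Prop :=
  [/\ nonarch_abs abs, abs_complete abs,
      abs (p%:R) = (p%:R)^-1
    & [pchar K] =i pred0].

Definition qint (K : fieldType) (q : K) (x : nat) : K := (1 - q ^+ x) / (1 - q).

Definition qfact (K : fieldType) (q : K) (n : nat) : K :=
  \prod_(1 <= i < n.+1) qint q i.
Definition qbinom (K : fieldType) (q : K) (k l : nat) : K :=
  qfact q k / (qfact q l * qfact q (k - l)).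

Definition fermionic_integral_is (R : realType) (K : fieldType) (p : nat)
    (abs : K -> R) (f : nat -> K) (l : K) : Prop :=
  forall e : R, 0 < e -> exists N0, forall N, (N0 <= N)%N ->
    abs ((\sum_(x < p ^ N) f x * (-1) ^+ x) - l) < e.

Definition is_qEuler (R : realType) (K : fieldType) (p : nat) (abs : K -> R)
    (q : K) (E : nat -> K) : Prop :=
  forall n, fermionic_integral_is p abs (fun x => qint q x ^+ n) (E n).

(* s n k = s_{2,q}(n,k): coefficients in the identity of polynomials in t = [x]_q
   t^n = sum_{k=0}^n q^{binom k 2} s_{2,q}(n,k) prod_{i<k} [x-i]_q,
   with [x-i]_q = q^{-i} (t - [i]_q). *)
Definition is_qStirling2 (K : fieldType) (q : K) (s : nat -> nat -> K) : Prop :=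
  forall n : nat, ('X^n : {poly K}) =
    \sum_(k < n.+1) (q ^+ 'C(k, 2) * s n k) *:
       \prod_(i < k) ((q ^- i) *: ('X - (qint q i)%:P)).

(* Main.v *)
Require Import Defs.
From HB Require Import structures.
From mathcomp Require Import all_boot all_order all_algebra all_field.
From mathcomp Require Import all_classical all_reals all_analysis.
From mathcomp Require Import ring zify.
Import Order.TTheory GRing.Theory Num.Theory.
Local Open Scope ring_scope.



Section QB.
Variables (K : fieldType) (q : K).

Fixpoint gb (k l : nat) : K :=
  match k, l with
  | _, 0 => 1
  | 0, _.+1 => 0
  | k'.+1, l'.+1 => q ^+ l'.+1 * gb k' l'.+1 + gb k' l'
  end.

Lemma gb0 k : gb k 0 = 1. Proof. by case: k. Qed.

Lemma gb_small k l : (k < l)%N -> gb k l = 0.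
Proof.
elim: k l => [|k IH] [|l] //= H.
by rewrite !IH ?mulr0 ?addr0 // ltnW.
Qed.

Lemma gb_diag k : gb k k = 1.
Proof. by elim: k => //= k ->; rewrite gb_small // mulr0 add0r. Qed.

Lemma qbin_thm k z : \prod_(j < k) (1 + z * q ^+ j) =
  \sum_(l < k.+1) gb k l * q ^+ 'C(l, 2) * z ^+ l.
Proof.
elim: k z => [|k IH] z.
  by rewrite big_ord0 big_ord1 /= !expr0 !mulr1.
rewrite big_ord_recl /= expr0 mulr1.
have -> : \prod_(i < k) (1 + z * q ^+ (lift ord0 i)) =
          \prod_(i < k) (1 + (z * q) * q ^+ i).
  by apply: eq_bigr => i _; rewrite lift0 exprS mulrA.
rewrite IH [in RHS]big_ord_recl /= ?gb0 !expr0 !mulr1.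
have -> : \sum_(i < k.+1) gb k.+1 (lift ord0 i) * q ^+ 'C(lift ord0 i, 2) *
      z ^+ lift ord0 i =
    \sum_(i < k.+1) (q ^+ i.+1 * gb k i.+1 * q ^+ 'C(i.+1, 2) * z ^+ i.+1)
  + \sum_(i < k.+1) (gb k i * q ^+ 'C(i.+1, 2) * z ^+ i.+1).
  by rewrite -big_split; apply: eq_bigr => i _ /=; rewrite ?lift0 /= !mulrDl.
rewrite mulrDl mul1r addrA; congr (_ + _).
  rewrite big_ord_recl big_ord_recr /= gb0 gb_small // mulr0 !mul0r addr0 !expr0 !mulr1.
  congr (_ + _); apply: eq_bigr => i _; rewrite /bump /= add1n exprMn; ring.
rewrite mulr_sumr; apply: eq_bigr => i _.
rewrite binS bin1 exprD exprMn exprS; ring.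
Qed.

Lemma qfactS n : qfact q n.+1 = qfact q n * qint q n.+1.
Proof. by rewrite /qfact big_nat_recr. Qed.

Lemma qfact0 : qfact q 0 = 1.
Proof. by rewrite /qfact big_geq. Qed.

Lemma qint_add a b : qint q a + q ^+ a * qint q b = qint q (a + b).
Proof. by rewrite /qint mulrA -mulrDl exprD; congr (_ / _); ring. Qed.

Lemma qfact_gb k l : (l <= k)%N -> qfact q k = gb k l * qfact q l * qfact q (k - l).
Proof.
elim: k l => [|k IH] [|l] //= Hl.
- by rewrite qfact0 !mul1r.
- by rewrite qfact0 ?subn0 !mul1r.
have [lk|kl] := ltnP l k; last first.
  have -> : l = k by apply/eqP; rewrite eqn_leq kl andbT.
  by rewrite gb_diag gb_small // subnn qfact0 mulr0 add0r mul1r mulr1.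
have eA := IH l.+1 lk.
have eB := IH l (ltnW lk).
rewrite subSS.
have hd : (k - l = (k - l.+1).+1)%N by lia.
rewrite hd !qfactS -hd.
have hk : (l.+1 + (k - l) = k.+1)%N by lia.
rewrite -hk -qint_add mulrDr.
rewrite {1}eB {1}eA hd qfactS -hd.
rewrite qfactS; ring.
Qed.

Hypothesis q1 : q != 1.
Hypothesis q0 : q != 0.

Lemma qint_neq0 i : q ^+ i != 1 -> qint q i != 0.
Proof.
move=> h; rewrite /qint mulf_neq0 // ?invr_eq0 subr_eq0 eq_sym //.
Qed.

Lemma qfact_neq0 k : (forall i, (0 < i <= k)%N -> q ^+ i != 1) -> qfact q k != 0.
Proof.
elim: k => [|k IH] H; first by rewrite qfact0 oner_eq0.
rewrite qfactS mulf_neq0 //.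
  by apply: IH => i /andP[a b]; apply: H; rewrite a ltnW.
by apply: qint_neq0; apply: H; rewrite leqnn.
Qed.

Lemma qbinom_gb k l : (l <= k)%N -> (forall i, (0 < i <= k)%N -> q ^+ i != 1) ->
  qbinom q k l = gb k l.
Proof.
move=> lk H; rewrite /qbinom (@qfact_gb k l lk) -[gb k l * _ * _]mulrA mulfK //.
rewrite mulf_neq0 // qfact_neq0 // => i /andP[a b]; apply: H;
  rewrite a /= (leq_trans b) // ?leq_subr //.
Qed.


Lemma core k t : (forall i, (0 < i <= k)%N -> q ^+ i != 1) ->
  \prod_(i < k) (q ^- i * (t - qint q i)) =
  \sum_(m < k.+1) \sum_(m <= l < k.+1) ((q - 1) ^ (m%:Z - k%:Z) * qbinom q k l
      * q ^ ('C(l, 2)%:Z + l%:Z * (1 - k%:Z)) * ('C(l, m))%:R * (-1) ^+ (l + k)) * t ^+ m.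
Proof.
move=> H.
have q10 : 1 - q != 0 by rewrite subr_eq0 eq_sym.
set a := q - 1. have a0 : a != 0 by rewrite subr_eq0.
set y := 1 + a * t. set w := q ^ (1 - k%:Z).
have Ea : \prod_(i < k) (q ^- i * (t - qint q i)) =
    ((1 - q)^-1) ^+ k * \prod_(i < k) (1 - y * q ^- i).
  have -> : ((1 - q)^-1) ^+ k = \prod_(i < k) (1 - q)^-1 by rewrite prodr_const card_ord.
  rewrite -big_split; apply: eq_bigr => i _ /=.
  rewrite /qint /y /a; field; rewrite ?q10 ?expf_neq0 //.
have Eb : \prod_(i < k) (1 - y * q ^- i) = \prod_(j < k) (1 + (- y * w) * q ^+ j).
  rewrite (reindex_inj rev_ord_inj) /=; apply: eq_bigr => j _.
  have -> : q ^- (k - j.+1) = w * q ^+ j.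
    rewrite /w exprnN exprnP -expfzDr //; congr (_ ^ _).
    have := ltn_ord j; lia.
  ring.
rewrite Ea Eb qbin_thm.
set T := fun m l : nat => a ^ (m%:Z - k%:Z) * qbinom q k l *
   q ^ ('C(l, 2)%:Z + l%:Z * (1 - k%:Z)) * ('C(l, m))%:R * (-1) ^+ (l + k) * t ^+ m.
rewrite [RHS](eq_bigr (fun m : 'I_k.+1 => \sum_(l < k.+1) T m l)); last first.
  move=> m _; rewrite -(big_mkord xpredT (T m)).
  rewrite (@big_cat_nat _ _ _ m 0 k.+1) //=; last exact: ltnW (ltn_ord m).
  rewrite (_ : \sum_(0 <= i < m) T m i = 0) ?add0r //.
  rewrite big_nat_cond big1 // => i /andP[/andP[_ im] _].
  by rewrite /T (bin_small im) mulr0 !mul0r.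
rewrite exchange_big mulr_sumr; apply: eq_bigr => l _.
rewrite /T (@qbinom_gb k l (ltn_ord l) H).
rewrite exprMn [(- _) ^+ l]exprNn /y [1 + a * t]addrC exprD1n.
rewrite (@big_ord_widen _ _ _ l.+1 k.+1 (fun m => (a * t) ^+ m *+ 'C(l, m)) (ltn_ord l)).
rewrite big_mkcond.
rewrite mulr_sumr mulr_suml !mulr_sumr; apply: eq_bigr => m _.
case: ifP => hm; last first.
  have lm : (l < m)%N by rewrite ltnNge -ltnS hm.
  by rewrite (bin_small lm) !(mulr0, mul0r).
have e1 : 1 - q = - a by rewrite /a opprB.
rewrite e1 expfzDr // -exprnN -exprnP expfzDr // [_ * (1 - _)]mulrC -exprz_exp -!exprnP.
have e2 : ((- a)^-1)^+k = (-1)^+k * (a ^+ k)^-1.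
  by rewrite invrN -[- a^-1]mulN1r exprMn exprVn.
rewrite e2 exprD -mulr_natr /w.
rewrite exprMn; ring.
Qed.
End QB.



Section Abs.
Context {R : realType} {K : fieldType} {abs : K -> R} (Ha : nonarch_abs abs).

Lemma abs_ge0 x : 0 <= abs x. Proof. by case: Ha. Qed.
Lemma abs_eq0 x : abs x = 0 <-> x = 0. Proof. by case: Ha. Qed.
Lemma absM x y : abs (x * y) = abs x * abs y. Proof. by case: Ha. Qed.
Lemma absD x y : abs (x + y) <= Num.max (abs x) (abs y). Proof. by case: Ha. Qed.

Lemma abs0 : abs 0 = 0. Proof. by apply/abs_eq0. Qed.
Lemma abs_gt0 x : x != 0 -> 0 < abs x.
Proof.
move=> h; rewrite lt_def abs_ge0 andbT; apply/eqP => /abs_eq0 e.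
by rewrite e eqxx in h.
Qed.

Lemma abs1 : abs 1 = 1.
Proof.
have h : abs 1 * (abs 1 - 1) = 0 by rewrite mulrBr mulr1 -absM mulr1 subrr.
have : abs 1 != 0 by apply/eqP => /abs_eq0 /eqP; rewrite oner_eq0.
move: h => /eqP; rewrite mulf_eq0 => /orP[/eqP -> | ]; first by rewrite eqxx.
by rewrite subr_eq0 => /eqP ->.
Qed.

Lemma absN1 : abs (-1) = 1.
Proof.
have h : abs (-1) ^+ 2 == 1 by rewrite expr2 -absM mulrNN mulr1 abs1.
move: h; rewrite sqrf_eq1 => /orP[/eqP // | /eqP e].
by have := abs_ge0 (-1); rewrite e ler0N1.
Qed.

Lemma absN x : abs (- x) = abs x.
Proof. by rewrite -mulN1r absM absN1 mul1r. Qed.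

Lemma absX x n : abs (x ^+ n) = abs x ^+ n.
Proof. by elim: n => [|n IH]; rewrite ?expr0 ?abs1 // !exprS absM IH. Qed.

Lemma absD_lt x y e : abs x < e -> abs y < e -> abs (x + y) < e.
Proof.
move=> hx hy; apply: le_lt_trans (absD x y) _.
by rewrite gt_max hx hy.
Qed.

Lemma absD_le x y e : abs x <= e -> abs y <= e -> abs (x + y) <= e.
Proof.
move=> hx hy; apply: le_trans (absD x y) _.
by rewrite ge_max hx hy.
Qed.

Lemma abs_sum_lt (I : Type) (r : seq I) (P : pred I) (F : I -> K) e :
  0 < e -> (forall i, P i -> abs (F i) < e) -> abs (\sum_(i <- r | P i) F i) < e.
Proof.
move=> e0 H; elim/big_ind: _ => //; first by rewrite abs0.
by move=> x y; apply: absD_lt.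
Qed.

Lemma abs_sum_le (I : Type) (r : seq I) (P : pred I) (F : I -> K) e :
  0 <= e -> (forall i, P i -> abs (F i) <= e) -> abs (\sum_(i <- r | P i) F i) <= e.
Proof.
move=> e0 H; elim/big_ind: _ => //; first by rewrite abs0.
by move=> x y; apply: absD_le.
Qed.

Lemma abs_eq_max x y : abs x < abs y -> abs (x + y) = abs y.
Proof.
move=> h; apply/eqP; rewrite eq_le.
have -> : abs (x + y) <= abs y.
  by apply: le_trans (absD x y) _; rewrite ge_max (ltW h) lexx.
rewrite /=; rewrite leNgt; apply/negP => h2.
have : abs ((x + y) + (- x)) < abs y by apply: absD_lt; rewrite ?absN.
by rewrite addrC addKr ltxx.
Qed.

Lemma abs_nat n : abs (n%:R) <= 1.
Proof.
elim: n => [|n IH]; first by rewrite abs0 ler01.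
by rewrite mulrS; apply: absD_le; rewrite ?abs1.
Qed.

Lemma abs_int (z : int) : abs (z%:~R) <= 1.
Proof.
case: z => n; first exact: abs_nat.
by rewrite NegzE mulrNz absN; apply: abs_nat.
Qed.

Lemma abs_natmul x n : abs (x *+ n) <= abs x.
Proof.
rewrite -mulr_natr absM -[leRHS]mulr1 ler_wpM2l ?abs_ge0 //; exact: abs_nat.
Qed.

End Abs.

Section FI.
Context {R : realType} {K : fieldType} {abs : K -> R} {p : nat}.
Hypothesis Ha : nonarch_abs abs.
Notation fi := (fermionic_integral_is p abs).

Lemma fi_ext {f g l} : (forall x, f x = g x) -> fi f l -> fi g l.
Proof.
move=> e h eps he; have [N HN] := h eps he; exists N => M hM.
have -> : \sum_(x < p ^ M) g x * (-1) ^+ x = \sum_(x < p ^ M) f x * (-1) ^+ x.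
  by apply: eq_bigr => i _; rewrite e.
exact: HN.
Qed.

Lemma fi_scale {c f l} : fi f l -> fi (fun x => c * f x) (c * l).
Proof.
move=> h eps he.
have [c0|c0] := eqVneq c 0.
  exists 0%N => N _; rewrite c0.
  rewrite big1; last by move=> i _; rewrite !mul0r.
  by rewrite mul0r subrr (abs0 Ha).
have ac := abs_gt0 Ha _ c0.
have [N HN] := h (eps / abs c) (divr_gt0 he ac); exists N => M hM.
have -> : \sum_(x < p ^ M) c * f x * (-1) ^+ x - c * l =
    c * (\sum_(x < p ^ M) f x * (-1) ^+ x - l).
  by rewrite mulrBr mulr_sumr; congr (_ - _); apply: eq_bigr => i _; rewrite mulrA.
have HM := HN M hM.
rewrite (absM Ha) (_ : eps = abs c * (eps / abs c)); last first.
  by rewrite mulrCA divff ?mulr1 // gt_eqF.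
by rewrite ltr_pM2l.
Qed.

Lemma fi_add {f g l1 l2} : fi f l1 -> fi g l2 -> fi (fun x => f x + g x) (l1 + l2).
Proof.
move=> h1 h2 eps he.
have [N1 H1] := h1 eps he; have [N2 H2] := h2 eps he.
exists (maxn N1 N2) => M hM.
have -> : \sum_(x < p ^ M) (f x + g x) * (-1) ^+ x - (l1 + l2) =
   (\sum_(x < p ^ M) f x * (-1) ^+ x - l1) + (\sum_(x < p ^ M) g x * (-1) ^+ x - l2).
  under eq_bigr => i _ do rewrite mulrDl.
  rewrite big_split /=; ring.
apply: absD_lt => //; [apply: H1 | apply: H2]; lia.
Qed.

Lemma fi_zero : fi (fun _ => 0) 0.
Proof.
move=> eps he; exists 0%N => N _.
by rewrite big1 ?subrr ?(abs0 Ha) // => i _; rewrite mul0r.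
Qed.

Lemma fi_sum (I : Type) (r : seq I) (P : pred I) (g : I -> nat -> K) (l : I -> K) :
  (forall i, P i -> fi (g i) (l i)) ->
  fi (fun x => \sum_(i <- r | P i) g i x) (\sum_(i <- r | P i) l i).
Proof.
move=> H; elim: r => [|a r IH].
  by rewrite big_nil; apply: (fi_ext _ fi_zero) => x; rewrite big_nil.
rewrite big_cons; case: ifP => Pa.
  apply: (fi_ext _ (fi_add (H a Pa) IH)) => x; by rewrite big_cons Pa.
by apply: (fi_ext _ IH) => x; rewrite big_cons Pa.
Qed.

Lemma fi_unique {f l1 l2} : fi f l1 -> fi f l2 -> l1 = l2.
Proof.
move=> h1 h2; apply/eqP/negPn/negP => ne.
have e0 : 0 < abs (l1 - l2) by apply: abs_gt0 => //; rewrite subr_eq0.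
have [N1 H1] := h1 _ e0; have [N2 H2] := h2 _ e0.
have : abs ((\sum_(x < p ^ maxn N1 N2) f x * (-1) ^+ x - l2) -
            (\sum_(x < p ^ maxn N1 N2) f x * (-1) ^+ x - l1)) < abs (l1 - l2).
  apply: absD_lt => //; rewrite ?(absN Ha); [apply: H2 | apply: H1]; lia.
set S := \sum_(x < p ^ maxn N1 N2) f x * (-1) ^+ x.
have -> : S - l2 - (S - l1) = l1 - l2 by ring.
by rewrite ltxx.
Qed.

End FI.



Section Root.
Context {R : realType} {K : fieldType} {abs : K -> R} (Ha : nonarch_abs abs).
Context {p : nat}.
Hypothesis hp : prime p.
Hypothesis hpabs : abs (p%:R) = (p%:R)^-1.

Let p1 : (1 < p)%N := prime_gt1 hp.
Let pR : 0 < (p%:R : R). Proof. by rewrite ltr0n; lia. Qed.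
Let pinv1 : (p%:R : R)^-1 < 1. Proof. by rewrite invf_lt1 // ltr1n. Qed.

Lemma abs_coprime m : ~~ (p %| m)%N -> abs (m%:R) = 1.
Proof.
move=> pm.
have hle := abs_nat Ha m.
apply/eqP; rewrite eq_le hle /= leNgt; apply/negP => hlt.
have [u [v e]] := Bezoutz (m%:Z) (p%:Z).
have g : gcdz m%:Z p%:Z = 1.
  have : coprime p m by rewrite prime_coprime.
  by rewrite /coprime gcdnC => /eqP; rewrite /gcdz /= => ->.
have : ((u * m%:Z + v * p%:Z)%:~R : K) = 1 by rewrite e g.
rewrite intrD !intrM -!pmulrn => e1.
have : abs 1 < 1.
  rewrite -e1; apply: absD_lt => //; rewrite (absM Ha).
    apply: le_lt_trans hlt; apply: ler_piMl; [exact: abs_ge0|exact: abs_int].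
  rewrite hpabs; apply: le_lt_trans pinv1; apply: ler_piMl; last exact: abs_int.
  by rewrite invr_ge0 ltW.
by rewrite (abs1 Ha) ltxx.
Qed.

Lemma abs_pdvd m : (p %| m)%N -> abs (m%:R) <= (p%:R)^-1.
Proof.
case/dvdnP => k ->; rewrite natrM (absM Ha) hpabs.
by apply: ler_piMl; [rewrite invr_ge0 ltW | exact: abs_nat].
Qed.

Definition rr : R := (p%:R : R) `^ (- ((p.-1)%:R)^-1).

Lemma rr_ge0 : 0 <= rr. Proof. exact: powR_ge0. Qed.

Lemma rr_pow : rr ^+ p.-1 = (p%:R)^-1.
Proof.
rewrite /rr -powR_mulrn ?powR_ge0 // -powRrM mulNr mulVf ?pnatr_eq0; last by lia.
by rewrite powRN powRr1 // ltW.
Qed.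

Lemma rr_lt1 : rr < 1.
Proof.
rewrite ltNge; apply/negP => h.
have := exprn_ege1 p.-1 h; rewrite rr_pow => h2.
by have := lt_le_trans pinv1 h2; rewrite ltxx.
Qed.

Lemma small c : abs c < rr -> abs c ^+ p.-1 < (p%:R)^-1.
Proof.
move=> h; rewrite -rr_pow ltrXn2r ?abs_ge0 //; lia.
Qed.

Lemma expand m (c : K) : (0 < m)%N ->
  (1 + c) ^+ m - 1 = c *+ m + \sum_(i < m.-1) c ^+ i.+2 *+ 'C(m, i.+2).
Proof.
case: m => // m _.
rewrite [1 + c]addrC exprD1n !big_ord_recl /= expr0 bin0 expr1 bin1.
have -> : \sum_(i < m) c ^+ lift ord0 (lift ord0 i) *+ 'C(m.+1, lift ord0 (lift ord0 i))
   = \sum_(i < m) c ^+ i.+2 *+ 'C(m.+1, i.+2) by apply: eq_bigr.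
by rewrite addrAC subrr add0r.
Qed.

Lemma pow_le2 (x : R) n : 0 <= x -> x <= 1 -> x ^+ n.+2 <= x ^+ 2.
Proof.
move=> x0 x1; rewrite -addn2 exprD; apply: ler_piMl.
  exact: exprn_ge0.
exact: exprn_ile1.
Qed.

Lemma noroot m : (0 < m)%N -> forall c, 0 < abs c -> abs c < rr -> (1 + c) ^+ m != 1.
Proof.
elim/ltn_ind: m => m IH m0 c c0 cr.
have c1 : abs c < 1 := lt_trans cr rr_lt1.
have c2 : abs c ^+ 2 < abs c.
  by rewrite expr2 -[ltRHS]mul1r ltr_pM2r.
have ac := abs_ge0 Ha c.
case: (boolP (p %| m)%N) => pm.
- have [m' em] : exists m', m = (p * m')%N.
    by case/dvdnP: pm => k ->; exists k; rewrite mulnC.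
  set c' := (1 + c) ^+ p - 1.
  have Hc' : abs c' = abs c / p%:R.
    rewrite /c' expand; last by lia.
    rewrite addrC abs_eq_max //.
      by rewrite -[c *+ _]mulr_natr (absM Ha) hpabs.
    rewrite -[c *+ _]mulr_natr (absM Ha) hpabs.
    apply: abs_sum_lt => //; first by rewrite mulr_gt0 // invr_gt0.
    move=> i _; case: (ltnP i.+2 p) => h.
      rewrite -[_ *+ 'C(_, _)]mulr_natr (absM Ha) (absX Ha).
      apply: (le_lt_trans (y := abs c ^+ 2 * p%:R^-1)).
        apply: ler_pM; [exact: exprn_ge0|exact: abs_ge0| |].
          by apply: pow_le2 => //; exact: ltW.
        by apply: abs_pdvd; apply: prime_dvd_bin => //; apply/andP; split.
      by rewrite ltr_pM2r // invr_gt0.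
    have ei : i.+2 = p by have := ltn_ord i; lia.
    rewrite ei binn mulr1n (absX Ha).
    have -> : abs c ^+ p = abs c * abs c ^+ p.-1 by rewrite -exprS prednK ?prime_gt0.
    by rewrite ltr_pM2l // small.
  have Hne : (1 + c') ^+ m' != 1.
    have m'0 : (0 < m')%N by move: m0; rewrite em muln_gt0 => /andP[].
    apply: IH => //.
      by rewrite em -{1}(mul1n m') ltn_pmul2r.
    + by rewrite Hc' divr_gt0.
    + rewrite Hc'; apply: le_lt_trans cr; rewrite ler_pdivrMr // ler_peMr //.
      by rewrite ler1n; lia.
  by rewrite em exprM -(subrK 1 ((1 + c) ^+ p)) addrC.
- apply/negP => /eqP h.
  have : abs ((1 + c) ^+ m - 1) = abs c.
    rewrite expand // addrC abs_eq_max //.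
      by rewrite -[c *+ _]mulr_natr (absM Ha) abs_coprime // mulr1.
    rewrite -[c *+ _]mulr_natr (absM Ha) abs_coprime // mulr1.
    apply: abs_sum_lt => // i _.
    apply: le_lt_trans c2; rewrite -[_ *+ 'C(_, _)]mulr_natr (absM Ha) (absX Ha).
    apply: le_trans (pow_le2 (abs c) i (abs_ge0 Ha c) (ltW c1)).
    by apply: ler_piMr; [exact: exprn_ge0 | exact: abs_nat].
  by rewrite h subrr (abs0 Ha) => /eqP; rewrite eq_sym gt_eqF.
Qed.

End Root.



Theorem mainTheorem1 (R : realType) (K : closedFieldType) (abs : K -> R)
    (p : nat) (q : K) (E : nat -> K) (s : nat -> nat -> K) :
  prime p -> odd p ->
  Cp_like p abs ->
  q != 1 ->
  abs (1 - q) < (p%:R : R) `^ (- ((p.-1)%:R)^-1) ->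
  is_qEuler p abs q E ->
  is_qStirling2 q s ->
  forall n : nat,
    E n = \sum_(k < n.+1) \sum_(m < k.+1) \sum_(m <= l < k.+1)
            q ^+ 'C(k, 2) * s n k * (q - 1) ^ (m%:Z - k%:Z) * qbinom q k l
            * q ^ ('C(l, 2)%:Z + l%:Z * (1 - k%:Z)) * ('C(l, m))%:R
            * (-1) ^+ (l + k) * E m.
Proof.
move=> hp _ [Ha _ hpabs _] q1 hqr HE Hs n.
have hr : abs (q - 1) < @rr R p by rewrite -opprB (absN Ha).
have c0 : 0 < abs (q - 1) by apply: (abs_gt0 Ha); rewrite subr_eq0.
have qi : forall i, (0 < i)%N -> q ^+ i != 1.
  move=> i hi; have := noroot Ha hp hpabs i hi (q - 1) c0 hr.
  by rewrite addrC subrK.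
have q0 : q != 0.
  apply/negP => /eqP e; move: hqr; rewrite e subr0 (abs1 Ha) => h.
  by have := lt_trans h (rr_lt1 hp); rewrite ltxx.
have pw : forall x, qint q x ^+ n = \sum_(k < n.+1) \sum_(m < k.+1) \sum_(m <= l < k.+1)
            (q ^+ 'C(k, 2) * s n k * (q - 1) ^ (m%:Z - k%:Z) * qbinom q k l
            * q ^ ('C(l, 2)%:Z + l%:Z * (1 - k%:Z)) * ('C(l, m))%:R
            * (-1) ^+ (l + k)) * qint q x ^+ m.
  move=> x; have := congr1 (fun P => P.[qint q x]) (Hs n).
  rewrite /= hornerXn => ->.
  rewrite horner_sum; apply: eq_bigr => k _.
  rewrite hornerZ horner_prod.
  rewrite (eq_bigr (fun i : 'I_k => q ^- i * (qint q x - qint q i))); last first.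
    by move=> i _; rewrite hornerZ hornerXsubC.
  rewrite (@core _ q q1 q0 k (qint q x)); last by move=> i /andP[hi _]; apply: qi.
  rewrite mulr_sumr; apply: eq_bigr => m _.
  rewrite mulr_sumr; apply: eq_bigr => l _.
  by rewrite !mulrA.
apply: (fi_unique Ha (HE n)).
apply: (fi_ext (fun x => esym (pw x))).
apply: (fi_sum Ha) => k _.
apply: (fi_sum Ha) => m _.
apply: (fi_sum Ha) => l _.
exact: (fi_scale Ha (HE m)).
Qed.
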